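(* Let $n \ge 3$ and let $x_1 < x_2 < \dots < x_n$ be real numbers; let $h(z) = \prod_{j=1}^n (x_j - z)$ and $q(z) = z - n\,h(z)/h'(z)$. Let $\theta \in \mathbb{C}$ and $R = \max\{|\theta - x_j| : 1 \le j \le n\}$, and let $\overline{B(\theta,R)}$ be the closed disc with center $\theta$ and radius $R$. Then $q\left(\mathbb{C} \setminus \overline{B(\theta,R)}\right) \subset \overline{B(\theta,R)}$. *)

(* Defs.v *)
From HB Require Import structures.
From mathcomp Require Import all_boot all_order all_algebra.
From mathcomp Require Import reals.
From mathcomp Require Export complex.
Set Implicit Arguments. Unset Strict Implicit. Unset Printing Implicit Defensive.
Import Order.TTheory GRing.Theory Num.Theory.
Local Open Scope ring_scope.

Definition hpoly (R : realType) (n : nat) (x : 'I_n -> R) : {poly R[i]} :=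
  \prod_(j < n) (((x j)%:C)%C%:P - 'X).

Definition qmap (R : realType) (n : nat) (x : 'I_n -> R) (z : R[i]) : R[i] :=
  z - n%:R * (hpoly x).[z] / ((hpoly x)^`()).[z].

(* R = max_j |theta - x_j| (norms are >= 0, and n >= 1 in use, so 0 is harmless) *)
Definition radius (R : realType) (n : nat) (x : 'I_n -> R) (theta : R[i]) : R :=
  \big[Num.max/0]_(j < n) ComplexField.Normc.normc (theta - ((x j)%:C)%C).

(* Main.v *)
Require Import Defs.
From HB Require Import structures.
From mathcomp Require Import all_boot all_order all_algebra.
From mathcomp Require Import reals complex.
From mathcomp Require Import ring lra.
Import Order.TTheory GRing.Theory Num.Theory.
Local Open Scope ring_scope.
Import ComplexField.Normc.

Lemma normc_sq (R : realType) (z : R[i]) : normc z ^+ 2 = (complex.Re z) ^+ 2 + (complex.Im z) ^+ 2.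
Proof. by case: z => a b /=; rewrite sqr_sqrtr // addr_ge0 // sqr_ge0. Qed.

Lemma normc_ge0 (R : realType) (z : R[i]) : 0 <= normc z.
Proof. case: z => a b /=; exact: sqrtr_ge0. Qed.

Lemma key (R : realType) (w d : R[i]) (r : R) : 0 <= r -> normc d <= r -> r <= normc w ->
  normc ((r ^+ 2)%:C%C + w * d) <= r * normc ((w^*)%C + d).
Proof.
move=> r0 hd hw.
have h1 : 0 <= r * normc ((w^*)%C + d) by rewrite mulr_ge0 // normc_ge0.
rewrite -(ler_pXn2r (n:=2)) ?nnegrE ?normc_ge0 // exprMn !normc_sq.
have hd2 : normc d ^+ 2 <= r ^+ 2 by rewrite ler_pXn2r ?nnegrE ?normc_ge0.
have hw2 : r ^+ 2 <= normc w ^+ 2 by rewrite ler_pXn2r ?nnegrE ?normc_ge0.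
move: hd2 hw2; rewrite !normc_sq; clear hd hw h1.
case: w => p q; case: d => s t /= hd2 hw2.
nra.
Qed.

Lemma deriv_prod_eval (R : realType) (I : eqType) (s : seq I) (c : I -> R[i]) (z : R[i]) :
  (forall j, j \in s -> z != c j) ->
  (\prod_(j <- s) ((c j)%:P - 'X))^`().[z] =
  (\prod_(j <- s) ((c j)%:P - 'X)).[z] * \sum_(j <- s) (z - c j)^-1.
Proof.
elim: s => [|a s IH] hs; first by rewrite !big_nil derivC horner0 mulr0.
rewrite !big_cons derivM !hornerD !hornerM derivB derivC derivX sub0r !hornerE.
rewrite IH; last by move=> j js; apply: hs; rewrite inE js orbT.
have ha : z - c a != 0 by rewrite subr_eq0 hs // inE eqxx.
set P := _.[z]; set S := \sum_(_ <- _) _.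
rewrite mulrDr; congr (_ + _); last by rewrite mulrA. by rewrite -opprB !mulNr mulrAC divff // mulN1r mulNr mul1r.
Qed.

Lemma normc_conj (R : realType) (w : R[i]) : normc ((w^*)%C) = normc w.
Proof. by case: w => p q /=; rewrite sqrrN. Qed.

Lemma mul_conj (R : realType) (w : R[i]) : w * (w^*)%C = ((normc w) ^+ 2)%:C%C.
Proof. by rewrite normc_sq; case: w => p q /=; simpc; rewrite (mulrC q p) addNr !expr2. Qed.

Lemma normc_sum (R : realType) (I : Type) (s : seq I) (F : I -> R[i]) :
  normc (\sum_(j <- s) F j) <= \sum_(j <- s) normc (F j).
Proof.
elim: s => [|a s IH]; first by rewrite !big_nil normc0.
rewrite !big_cons; apply: le_trans (le_normcD _ _) _; exact: lerD.
Qed.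

Lemma normc_nat (R : realType) n : normc (n%:R : R[i]) = n%:R.
Proof. by rewrite normcMn normc1. Qed.

Lemma bigmax_ge (R : rcfType) (I : eqType) (s : seq I) (F : I -> R) j :
  j \in s -> F j <= \big[Num.max/0]_(i <- s) F i.
Proof.
elim: s => [|a s IH] //; rewrite inE big_cons => /orP[/eqP->|js].
  by rewrite le_max lexx.
by rewrite le_max IH ?orbT.
Qed.

Lemma bigmax_ge0 (R : rcfType) (I : Type) (s : seq I) (F : I -> R) :
  0 <= \big[Num.max/0]_(i <- s) F i.
Proof. elim: s => [|a s IH]; rewrite ?big_nil ?big_cons ?le_max ?IH ?orbT //. Qed.

Theorem mainTheorem9 (R : realType) (n : nat) (x : 'I_n -> R) (theta : R[i])
  (hn : (3 <= n)%N)
  (hx : forall i j : 'I_n, (i < j)%N -> x i < x j) :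
  forall z : R[i], radius x theta < ComplexField.Normc.normc (z - theta) ->
    ComplexField.Normc.normc (qmap x z - theta) <= radius x theta.
Proof.
move=> z hz.
set r := radius x theta in hz *.
set c := fun j : 'I_n => ((x j)%:C)%C.
have hr j : normc (c j - theta) <= r.
  rewrite -normcN opprB /r /radius; exact: (@bigmax_ge _ _ (index_enum _) (fun j => normc (theta - ((x j)%:C)%C)) j (mem_index_enum j)).
have r0 : 0 <= r by rewrite /r /radius; apply: bigmax_ge0.
have hzc j : z != c j.
  apply/negP => /eqP ej; move: (hr j); rewrite -ej => hle.
  by move: (lt_le_trans hz hle); rewrite ltxx.
set S := \sum_(j < n) (z - c j)^-1.
set h := (hpoly x).[z].
have hh' : (hpoly x)^`().[z] = h * S.
  by rewrite /h /hpoly; apply: deriv_prod_eval => j _; apply: hzc.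
have hh0 : h != 0.
  rewrite /h /hpoly horner_prod; apply/prodf_neq0 => j _.
  by rewrite !hornerE subr_eq0 eq_sym; apply: hzc.
set W := z - theta in hz *.
set Wc := (W^*)%C.
set K := W * Wc - (r ^+ 2)%:C%C.
have hK : K = ((normc W) ^+ 2 - r ^+ 2)%:C%C.
  by rewrite /K /Wc mul_conj; simpc.
have hK0 : K != 0.
  have hc : 0 < normc W ^+ 2 - r ^+ 2 by nra.
  rewrite hK; apply/negP => /eqP /complexI /eqP; by rewrite gt_eqF.
set D := fun j => K * (z - c j)^-1 - Wc.
have hD j : normc (D j) <= r.
  have zc : z - c j != 0 by rewrite subr_eq0 hzc.
  have -> : D j = - ((r ^+ 2)%:C%C + Wc * (theta - c j)) / (z - c j).
    by rewrite /D /K /W /Wc; field.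
  have e : (Wc^*)%C + (theta - c j) = z - c j by rewrite /Wc conjcK /W addrA subrK.
  have nz : 0 < normc (z - c j).
    rewrite lt_neqAle normc_ge0 andbT eq_sym; apply/negP => /eqP /eq0_normc /eqP.
    by rewrite (negbTE zc).
  rewrite normcM normcN normcV ler_pdivrMr // -e.
  apply: key => //; last by rewrite normc_conj ltW.
  by rewrite -normcN opprB.
have hn0 : (n%:R : R[i]) != 0 by rewrite pnatr_eq0 -lt0n (leq_trans _ hn).
set Dm := (\sum_(j < n) D j) / n%:R.
have hsum : \sum_(j < n) D j = K * S - n%:R * Wc.
  by rewrite /D sumrB -mulr_sumr sumr_const card_ord mulr_natl.
have hDm : normc Dm <= r.
  rewrite /Dm normcM normcV normc_nat ler_pdivrMr ?ltr0n ?(leq_trans _ hn) //.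
  have H := @normc_sum R _ (index_enum (ordinal n)) D. refine (le_trans H _).
  apply: le_trans (ler_sum _ (fun j _ => hD j)) _.
  by rewrite sumr_const card_ord mulr_natr.
have hWD : Wc + Dm != 0.
  apply/negP => /eqP e; move: hDm; rewrite -(addKr Wc Dm) e addr0.
  by rewrite normcN normc_conj => /(lt_le_trans hz); rewrite ltxx.
have hS : S = n%:R * (Wc + Dm) / K.
  by rewrite /Dm hsum; field; rewrite hK0 hn0.
have hK1 : W * Wc - (r ^+ 2)%:C%C != 0 by [].
have -> : qmap x z - theta = ((r ^+ 2)%:C%C + W * Dm) / (Wc + Dm).
  rewrite /qmap hh' -/h hS.
  rewrite /K. move: hK1 hWD hn0 hh0. rewrite /W. move=> ha hb hc hd. field. by rewrite hb hc hd andbT /= -rmorphXn ha.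
have nz : 0 < normc (Wc + Dm).
  rewrite lt_neqAle normc_ge0 andbT eq_sym; apply/negP => /eqP /eq0_normc /eqP.
  by rewrite (negbTE hWD).
rewrite normcM normcV ler_pdivrMr //.
by apply: key => //; rewrite ltW.
Qed.
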